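(* Let $q\ge1$ and let $\mathcal{T}_q=(\tau_1,\ldots,\tau_q)$ be the permutation ideal in $S_{\mathcal{T}}$. Then (a) $\mathcal{T}_q$ is minimally generated by $\{\tau_1,\ldots,\tau_q\}$; (b) $\mathcal{T}_q^{\,2}$ is minimally generated by $\{\tau_i\tau_j:1\le i\le j\le q\}$, and in particular the minimal generating set of $\mathcal{T}_q^{\,2}$ has exactly $\binom{q}{2}+q$ elements.
   Context: Let $S_q$ be the symmetric group on $[q]=\{1,\ldots,q\}$; for $\sigma=i_1\cdots i_q$ in one-line notation, $\sigma(j)=i_j$. Let $K$ be a field, $S_{\mathcal{T}}=K[x_\sigma:\sigma\in S_q]$, $\tau_i=\prod_{\sigma\in S_q}x_\sigma^{\sigma(i)}$ for $i\in[q]$, and $\mathcal{T}_q=(\tau_1,\ldots,\tau_q)$ (the permutation ideal). *)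

(* Defs.v *)
From mathcomp Require Import all_boot all_fingroup all_algebra.
From mathcomp Require Export mpoly.
 Unset Strict Implicit. Unset Printing Implicit Defensive.
Import GRing.Theory.
Local Open Scope ring_scope.

Definition in_ideal {R : comNzRingType} (P : R -> Prop) (p : R) : Prop :=
  exists (gs cs : seq R), size cs = size gs /\ (forall g, g \in gs -> P g) /\
    p = \sum_(i < size gs) cs`_i * gs`_i.

Definition ideal_prod {R : comNzRingType} (I J : R -> Prop) : R -> Prop :=
  in_ideal (fun h => exists f g, I f /\ J g /\ h = f * g).

Definition gen_by {R : comNzRingType} (I : R -> Prop) (G : seq R) : Prop :=
  forall p, I p <-> in_ideal (fun g => g \in G) p.

Definition min_gen {R : comNzRingType} (I : R -> Prop) (G : seq R) : Prop :=
  gen_by I G /\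
  forall G' : seq R, {subset G' <= G} -> gen_by I G' -> {subset G <= G'}.

(* S_T = K[x_sigma : sigma in S_q]; variables indexed via enum_rank *)
Definition nvars (q : nat) : nat := #|{perm 'I_q}|.

Definition permRing (K : fieldType) (q : nat) :=
  {mpoly K[nvars q]}.

Definition xvar (K : fieldType) (q : nat) (s : {perm 'I_q}) : permRing K q :=
  'X_(enum_rank s).

(* tau_i = prod_sigma x_sigma^(sigma(i)); 'I_q is 0-based, so the paper's
   value sigma(i) in [q] is (s i).+1 *)
Definition tau (K : fieldType) (q : nat) (i : 'I_q) : permRing K q :=
  \prod_(s : {perm 'I_q}) xvar K q s ^+ (s i).+1.

Definition tau_gens (K : fieldType) (q : nat) : seq (permRing K q) :=
  [seq tau K q i | i <- enum 'I_q].

Definition permIdeal (K : fieldType) (q : nat) : permRing K q -> Prop :=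
  in_ideal (fun g => g \in tau_gens K q).

Definition tau2_gens (K : fieldType) (q : nat) : seq (permRing K q) :=
  [seq tau K q p.1 * tau K q p.2 | p <- [seq p : 'I_q * 'I_q <- enum [set: 'I_q * 'I_q] | (nat_of_ord p.1 <= nat_of_ord p.2)%N]].

(* Main.v *)
Require Import Defs.
From mathcomp Require Import all_boot all_fingroup all_algebra.
From mathcomp Require Import mpoly.
From mathcomp Require Import zify.
Import GRing.Theory.
Local Open Scope ring_scope.
Section Ideal.
Variable R : comNzRingType.
Implicit Types P Q : R -> Prop.

Lemma in_ideal0 P : in_ideal P 0.
Proof. by exists [::], [::]; split=> //; split=> //; rewrite big_ord0. Qed.

Lemma in_ideal_gen P g : P g -> in_ideal P g.
Proof.
move=> Pg; exists [:: g], [:: 1]; split=> //; split.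
  by move=> h; rewrite mem_seq1 => /eqP ->.
by rewrite big_ord1 mul1r.
Qed.

Lemma in_ideal_add P p1 p2 : in_ideal P p1 -> in_ideal P p2 -> in_ideal P (p1 + p2).
Proof.
move=> [gs1 [cs1 [s1 [h1 ->]]]] [gs2 [cs2 [s2 [h2 ->]]]].
exists (gs1 ++ gs2), (cs1 ++ cs2); split; first by rewrite !size_cat s1 s2.
split; first by move=> g; rewrite mem_cat => /orP [] ?; [apply h1|apply h2].
rewrite size_cat big_split_ord /=; congr (_ + _); apply: eq_bigr => i _.
  by rewrite !nth_cat /= s1 ltn_ord.
by rewrite !nth_cat /= s1 ltnNge leq_addr /= addKn.
Qed.

Lemma in_ideal_mull P c p : in_ideal P p -> in_ideal P (c * p).
Proof.
move=> [gs [cs [s [h ->]]]]; exists gs, [seq c * x | x <- cs]; split.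
  by rewrite size_map.
split=> //; rewrite mulr_sumr; apply: eq_bigr => i _.
by rewrite (nth_map 0) ?s // mulrA.
Qed.

Lemma in_ideal_sum P (I : finType) (F : I -> R) :
  (forall i, in_ideal P (F i)) -> in_ideal P (\sum_i F i).
Proof.
move=> h; apply: (big_ind (in_ideal P)) => //.
  exact: in_ideal0.
by move=> x y; apply: in_ideal_add.
Qed.

Lemma in_ideal_trans P Q p :
  (forall g, P g -> in_ideal Q g) -> in_ideal P p -> in_ideal Q p.
Proof.
move=> hPQ [gs [cs [s [h ->]]]]; apply: in_ideal_sum => i.
apply: in_ideal_mull; apply: hPQ; apply: h; exact: mem_nth.
Qed.
End Ideal.
Section Mono.
Variables (n : nat) (F : fieldType).
Local Notation R := {mpoly F[n]}.

Lemma mcoeffMX0 (p : R) m k : ~~ (m <= k)%MM -> (p * 'X_[m])@_k = 0.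
Proof.
move=> hmk; rewrite {1}[p]mpolyE mulr_suml raddf_sum /=.
apply: big1 => m' _; rewrite -scalerAl -mpolyXD mcoeffZ mcoeffX.
case: eqP => [e|_]; last by rewrite mulr0.
by move: hmk; rewrite -e lem_addl.
Qed.

Lemma in_ideal_coeff0 (P : R -> Prop) M p : in_ideal P p ->
  (forall g, P g -> exists m, g = 'X_[m] /\ ~~ (m <= M)%MM) -> p@_M = 0.
Proof.
move=> [gs [cs [s [h ->]]]] hP; rewrite raddf_sum /=; apply: big1 => i _.
have [m [-> hm]] := hP _ (h _ (mem_nth 0 (ltn_ord i))).
exact: mcoeffMX0.
Qed.

Lemma min_gen_mono (I : R -> Prop) (G : seq R) :
  gen_by I G ->
  (forall g, g \in G -> exists m, g = 'X_[m]) ->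
  (forall g g' m m', g \in G -> g' \in G -> g = 'X_[m] -> g' = 'X_[m'] ->
      (m <= m')%MM -> g = g') ->
  min_gen I G.
Proof.
move=> hgen hmono hle; split=> // G' sub hG' g0 g0G.
apply/negPn/negP => ng0.
have [M eM] := hmono _ g0G.
have : I g0.
  apply/hgen; exists [:: g0], [:: 1]; split=> //; split.
    by move=> h; rewrite mem_seq1 => /eqP ->.
  by rewrite big_ord1 mul1r.
move/hG' => /(@in_ideal_coeff0 _ M) h.
have : g0@_M = 0.
  apply: h => g gG'; have [m em] := hmono _ (sub _ gG').
  exists m; split=> //; apply/negP => le.
  have eg := hle _ _ _ _ (sub _ gG') g0G em eM le.
  by move: ng0; rewrite -eg gG'.
by rewrite eM mcoeffX eqxx => /eqP; rewrite oner_eq0.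
Qed.
End Mono.
Definition mt (q : nat) (i : 'I_q) : 'X_{1..nvars q} :=
  (\sum_(s : {perm 'I_q}) U_(enum_rank s) *+ (s i).+1)%MM.
Arguments mt {q}.

Lemma mtE q (i : 'I_q) s : mt i (enum_rank s) = (s i).+1.
Proof.
rewrite /mt mnm_sumE (bigD1 s) //= big1 ?addn0.
  by rewrite mulmnE mnm1E eqxx mul1n.
move=> s' ns; rewrite mulmnE mnm1E.
case: eqP => [/enum_rank_inj e|]; last by rewrite mul0n.
by move: ns; rewrite e eqxx.
Qed.

Lemma tval q (a b x : 'I_q) : nat_of_ord (tperm a b x) =
  if (x : nat) == a then (b : nat) else if (x : nat) == b then (a : nat) else x.
Proof.
case: tpermP => [->|->|xa xb]; rewrite ?eqxx //.
  by case: eqP.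
case: eqP => [/val_inj e|_]; first by [].
by case: eqP => [/val_inj e|_].
Qed.

Definition rvp q : {perm 'I_q} := perm (@rev_ord_inj q).

Lemma rvpE q (x : 'I_q) : nat_of_ord (rvp q x) = (q - x.+1)%N.
Proof. by rewrite permE. Qed.

Lemma mt_le q (i j : 'I_q) : (mt i <= mt j)%MM -> i = j.
Proof.
move/mnm_lepP => H.
have h1 := H (enum_rank 1%g); have h2 := H (enum_rank (tperm i j)).
rewrite !mtE !perm1 in h1; rewrite !mtE tpermL tpermR in h2.
by apply: val_inj => /=; lia.
Qed.

Lemma mt2_le q (i j k l : 'I_q) : (i <= j)%N -> (k <= l)%N ->
  (mt k + mt l <= mt i + mt j)%MM -> k = i /\ l = j.
Proof.
move=> hij hkl /mnm_lepP H.
have HS (s : {perm 'I_q}) : (s k + s l <= s i + s j)%N.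
  by have := H (enum_rank s); rewrite !mnmDE !mtE; lia.
have h1 := HS 1%g; rewrite !perm1 in h1.
have h2 := HS (rvp q); rewrite !rvpE in h2.
have hi := ltn_ord i; have hj := ltn_ord j; have hk := ltn_ord k; have hl := ltn_ord l.
have e : (k + l = i + j)%N by lia.
have h3 := HS (tperm j k); rewrite !tval in h3.
have h4 := HS (tperm k j); rewrite !tval in h4.
suff [e1 e2] : (k : nat) = i /\ (l : nat) = j by split; apply: val_inj.
move: h3 h4; do ! case: eqP; lia.
Qed.
Lemma tauE K q i : tau K q i = 'X_[mt i].
Proof. by rewrite /tau /xvar mprodXnE. Qed.

Lemma mpolyX_inj n (F : fieldType) (m m' : 'X_{1..n}) : 'X_[F, m] = 'X_[F, m'] -> m = m'.
Proof.
move=> e; have := mcoeffX F m m; rewrite e mcoeffX eqxx.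
by case: eqP => // _ /eqP; rewrite eq_sym oner_eq0.
Qed.

Lemma cnt q : (\sum_(0 <= i < q) \sum_(0 <= j < q) (i <= j : nat) = 'C(q, 2) + q)%N.
Proof.
elim: q => [|q IH]; first by rewrite !big_geq.
rewrite big_nat_recr //= (@eq_big_nat _ _ _ 0 q _ (fun i => \sum_(0 <= j < q) (i <= j : nat) + 1)%N).
  rewrite big_split /= IH sum_nat_const_nat.
  rewrite big_nat_recr //= leqnn big_nat_cond big1; last first.
    by move=> j /andP [/andP [_ lt] _]; move: lt; rewrite ltnNge => /negbTE ->.
  rewrite binS bin1; lia.
move=> i /andP [_ lt]; rewrite big_nat_recr //= ltnW //.
Qed.
Lemma cnt2 q : count (fun p : 'I_q * 'I_q => (nat_of_ord p.1 <= nat_of_ord p.2)%N) (enum [set: 'I_q * 'I_q]) = ('C(q, 2) + q)%N.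
Proof.
rewrite -sum1_count big_enum_cond -cnt.
rewrite (eq_bigl (fun p : 'I_q * 'I_q => (nat_of_ord p.1 <= nat_of_ord p.2)%N)); last by move=> p; rewrite in_setT.
rewrite big_mkcond -(pair_big xpredT xpredT (fun i j : 'I_q => if (nat_of_ord i <= nat_of_ord j)%N then 1%N else 0%N)) /=.

rewrite big_mkord; apply: eq_bigr => i _; rewrite big_mkord; apply: eq_bigr => j _.
by case: leqP.
Qed.

Lemma mem_tau2 K q g : g \in tau2_gens K q <->
  exists i j : 'I_q, (nat_of_ord i <= nat_of_ord j)%N /\ g = tau K q i * tau K q j.
Proof.
split.
  case/mapP => [[i j]]; rewrite mem_filter /= => /andP [le _] ->.
  by exists i, j.
move=> [i [j [le ->]]]; apply/mapP; exists (i, j) => //.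
by rewrite mem_filter /= le mem_enum in_setT.
Qed.

Theorem lemma4p3 (K : fieldType) (q : nat) (hq : (1 <= q)%N) :
  min_gen (permIdeal K q) (tau_gens K q) /\
  (min_gen (ideal_prod (permIdeal K q) (permIdeal K q)) (tau2_gens K q) /\
   size (undup (tau2_gens K q)) = ('C(q, 2) + q)%N).
Proof.
have tauG i : tau K q i \in tau_gens K q by apply: map_f; rewrite mem_enum.
split.
  apply: min_gen_mono => //.
    by move=> g /mapP [i _ ->]; exists (mt i); rewrite tauE.
  move=> g g' m m' /mapP [i _ ->] /mapP [j _ ->].
  rewrite !tauE => /mpolyX_inj <- /mpolyX_inj <- /mt_le ->; done.
have inj : forall i j k l : 'I_q, (nat_of_ord i <= nat_of_ord j)%N ->
    (nat_of_ord k <= nat_of_ord l)%N ->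
    (mt k + mt l <= mt i + mt j)%MM -> k = i /\ l = j.
  exact: mt2_le.
split.
  apply: min_gen_mono.
  - move=> p; split.
      apply: in_ideal_trans => h [f [g [[gs [cs [s [hg ->]]]] [[hs [ds [t [hh ->]]] ->]]]]].
      rewrite mulr_suml; apply: in_ideal_sum => a; rewrite mulr_sumr.
      apply: in_ideal_sum => b.
      rewrite mulrACA; apply: in_ideal_mull; apply: in_ideal_gen.
      have := hg _ (mem_nth 0 (ltn_ord a)); have := hh _ (mem_nth 0 (ltn_ord b)).
      case/mapP => y _ -> /mapP [x _ ->].
      apply/mem_tau2; case: (leqP x y) => lexy.
        by exists x, y.
      by exists y, x; split; [exact: ltnW | rewrite mulrC].
    apply: in_ideal_trans => g /mem_tau2 [i [j [_ ->]]].
    apply: in_ideal_gen; exists (tau K q i), (tau K q j).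
    by split; [|split]; try apply: in_ideal_gen.
  - move=> g /mem_tau2 [i [j [_ ->]]]; exists (mt i + mt j)%MM.
    by rewrite !tauE mpolyXD.
  - move=> g g' m m' /mem_tau2 [k [l [hkl ->]]] /mem_tau2 [i [j [hij ->]]].
    rewrite !tauE -!mpolyXD => /mpolyX_inj <- /mpolyX_inj <- /(inj _ _ _ _ hij hkl).
    by case=> -> ->.
rewrite undup_id.
  by rewrite size_map size_filter cnt2.
rewrite map_inj_in_uniq; first by apply: filter_uniq; apply: enum_uniq.
move=> [k l] [i j]; rewrite !mem_filter /= => /andP [hkl _] /andP [hij _].
rewrite !tauE -!mpolyXD => /mpolyX_inj e.
have le : (mt k + mt l <= mt i + mt j)%MM by rewrite e lepm_refl.
by have [-> ->] := inj _ _ _ _ hij hkl le.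
Qed.
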